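(* Let $A$ be an Artin algebra and $\mathcal C,\mathcal D$ subcategories of $A\text{-mod}$. Then $$\max\{\operatorname{ed}\mathcal C,\operatorname{ed}\mathcal D\}\le\operatorname{ed}(\mathcal C\bullet\mathcal D)\le\operatorname{ed}\mathcal C+\operatorname{ed}\mathcal D+1.$$
   Context: Subcategories are full, additive and closed under isomorphisms. For subcategories $\mathcal T_1,\mathcal T_2$, $\mathcal T_1\bullet\mathcal T_2:=\operatorname{add}\{X\mid\exists$ exact $0\to T_1\to X\to T_2\to0$, $T_i\in\mathcal T_i\}$, where $\operatorname{add}$ denotes closure under finite direct sums and direct summands. For a module $T$: $[T]_0=\{0\}$, $[T]_1=\operatorname{add}(T)$, $[T]_n=[T]_1\bullet[T]_{n-1}$. $\operatorname{ed}\mathcal C=\inf\{n\ge0\mid\mathcal C\subseteq[T]_{n+1}$ for some $T\in A\text{-mod}\}$. *)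

(* Defs.v *)
From HB Require Import structures.
From mathcomp Require Import all_boot all_order all_algebra.
From mathcomp Require Import boolp.
Set Implicit Arguments. Unset Strict Implicit. Unset Printing Implicit Defensive.
Import GRing.Theory.
Local Open Scope ring_scope.

Definition is_ideal (R : comPzRingType) (I : R -> Prop) : Prop :=
  I 0 /\ (forall x y, I x -> I y -> I (x + y)) /\ (forall r x, I x -> I (r * x)).

Definition artinian (R : comPzRingType) : Prop :=
  forall I : nat -> R -> Prop, (forall n, is_ideal (I n)) ->
    (forall n x, I n.+1 x -> I n x) ->
    exists N, forall n, (N <= n)%N -> forall x, I n x <-> I N x.

(** A is an Artin algebra: there is a commutative artinian ring R and a ring
    morphism R -> Z(A) making A a finitely generated R-module. *)
Definition artin_algebra (A : pzRingType) : Prop :=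
  exists (R : comPzRingType) (phi : {rmorphism R -> A}),
    artinian R /\ (forall r a, phi r * a = a * phi r) /\
    exists s : seq A, forall a : A,
      exists c : 'I_(size s) -> R, a = \sum_(i < size s) phi (c i) * s`_i.

Section Modules.
Variable A : pzRingType.

Definition is_lin (M N : lmodType A) (f : M -> N) : Prop :=
  forall (a : A) (x y : M), f (a *: x + y) = a *: f x + f y.

(** finitely generated left A-modules: the objects of A-mod *)
Definition fg (M : lmodType A) : Prop :=
  exists s : seq M, forall m : M,
    exists c : 'I_(size s) -> A, m = \sum_(i < size s) c i *: s`_i.

Definition iso (M N : lmodType A) : Prop :=
  exists f : M -> N, is_lin f /\ bijective f.

Definition is_zero (M : lmodType A) : Prop := forall x : M, x = 0.

(** add S : closure under isomorphisms, finite direct sums (including the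
    empty sum 0) and direct summands. *)
Inductive addc (S : lmodType A -> Prop) : lmodType A -> Prop :=
| addc_zero (X : lmodType A) : is_zero X -> addc S X
| addc_in (X Y : lmodType A) : S Y -> iso Y X -> addc S X
| addc_sum (X Y Z : lmodType A) : addc S Y -> addc S Z -> iso (Y * Z)%type X -> addc S X
| addc_summand (X Y Z : lmodType A) : addc S Y -> iso (X * Z)%type Y -> addc S X.

Definition short_exact (T1 X T2 : lmodType A) (f : T1 -> X) (g : X -> T2) : Prop :=
  is_lin f /\ is_lin g /\ injective f /\ (forall z, exists x, g x = z) /\
  (forall x, g x = 0 <-> exists t, f t = x).

Definition bullet (T1 T2 : lmodType A -> Prop) : lmodType A -> Prop :=
  addc (fun X => exists (Y1 Y2 : lmodType A) (f : Y1 -> X) (g : X -> Y2),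
           T1 Y1 /\ T2 Y2 /\ short_exact f g).

Fixpoint layer (T : lmodType A) (n : nat) : lmodType A -> Prop :=
  match n with
  | 0 => is_zero
  | 1 => addc (fun X => X = T)
  | n'.+1 => bullet (addc (fun X => X = T)) (layer T n')
  end.

(** subcategory of A-mod: full (automatic), contained in A-mod, additive and
    closed under isomorphisms, i.e. equal to its add-closure. *)
Definition subcat (C : lmodType A -> Prop) : Prop :=
  (forall X, C X -> fg X) /\ (forall X, addc C X -> C X).

Definition ed_le (C : lmodType A -> Prop) (n : nat) : Prop :=
  exists T : lmodType A, fg T /\ forall X, C X -> layer T n.+1 X.

(** extension dimension, valued in nat ∪ {∞} (None = ∞) *)
Definition ed (C : lmodType A -> Prop) : option nat :=
  match pselect (exists n, ed_le C n) with
  | left h => Some (@ex_minn (fun n => `[< ed_le C n >])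
                     (let: ex_intro n hn := h in ex_intro _ n (asboolT hn)))
  | right _ => None
  end.
End Modules.

Definition ole (x y : option nat) : Prop :=
  match x, y with
  | _, None => True
  | None, Some _ => False
  | Some a, Some b => (a <= b)%N
  end.
Definition oadd (x y : option nat) : option nat :=
  match x, y with Some a, Some b => Some (a + b)%N | _, _ => None end.
Definition omax (x y : option nat) : option nat :=
  match x, y with Some a, Some b => Some (maxn a b) | _, _ => None end.

(* Main.v *)
Require Import Defs.
From HB Require Import structures.
From mathcomp Require Import all_boot all_order all_algebra boolp.
Set Implicit Arguments. Unset Strict Implicit. Unset Printing Implicit Defensive.
Import GRing.Theory.
Local Open Scope ring_scope.

Section Quot.
Variables (A : pzRingType) (E : lmodType A) (P : E -> Prop).
Definition is_sub := P 0 /\ forall a x y, P x -> P y -> P (a *: x + y).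
Hypothesis hP : is_sub.
Let hP0 : P 0. Proof. by case: hP. Qed.
Let hPl : forall a x y, P x -> P y -> P (a *: x + y). Proof. by case: hP. Qed.

Lemma PN x : P x -> P (- x).
Proof. by move=> h; have := hPl (-1) h hP0; rewrite addr0 scaleN1r. Qed.
Lemma PD x y : P x -> P y -> P (x + y).
Proof. by move=> h1 h2; have := hPl 1 h1 h2; rewrite scale1r. Qed.
Lemma PZ a x : P x -> P (a *: x).
Proof. by move=> h; have := hPl a h hP0; rewrite addr0. Qed.
Lemma PB x y : P x -> P y -> P (x - y).
Proof. by move=> h1 h2; apply: PD h1 (PN h2). Qed.

Definition qrel (x y : E) : bool := `[< P (x - y) >].

Lemma qrefl x : qrel x x.
Proof. by apply/asboolP; rewrite subrr. Qed.
Lemma qsym x y : qrel x y -> qrel y x.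
Proof. by move/asboolP=> h; apply/asboolP; rewrite -opprB; apply: PN. Qed.
Lemma qtrans x y z : qrel x y -> qrel y z -> qrel x z.
Proof.
move=> /asboolP h1 /asboolP h2; apply/asboolP.
by have := PD h1 h2; rewrite addrA subrK.
Qed.

Definition canon (x : E) : E := xchoose (ex_intro (fun y => qrel x y) x (qrefl x)).

Lemma canon_rel x : qrel x (canon x).
Proof. exact: xchooseP. Qed.

Lemma canon_eq x y : qrel x y -> canon x = canon y.
Proof.
move=> hxy; apply: eq_xchoose => z; apply/idP/idP => h.
  exact: qtrans (qsym hxy) h.
exact: qtrans hxy h.
Qed.

Lemma canon_idem x : canon (canon x) = canon x.
Proof. by apply: canon_eq; apply: qsym; apply: canon_rel. Qed.

Definition quot : Type := let _ := hP in {x : E | canon x == x}.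

HB.instance Definition _ := Choice.copy quot {x : E | canon x == x}.

Definition qpi (x : E) : quot := exist _ (canon x) (introT eqP (canon_idem x)).

Lemma qpi_val (q : quot) : qpi (sval q) = q.
Proof. by case: q => x hx; apply/val_inj => /=; apply/eqP. Qed.

Lemma qpi_eq x y : qpi x = qpi y <-> qrel x y.
Proof.
split=> [h|h]; last by apply/val_inj => /=; apply: canon_eq.
have: canon x = canon y by have := congr1 sval h.
move=> e; apply: qtrans (canon_rel x) _; rewrite e; exact: qsym (canon_rel y).
Qed.

Lemma qrelD x y x' y' : qrel x x' -> qrel y y' -> qrel (x + y) (x' + y').
Proof.
move=> /asboolP h1 /asboolP h2; apply/asboolP.
by have := PD h1 h2; rewrite opprD addrACA.
Qed.
Lemma qrelN x x' : qrel x x' -> qrel (- x) (- x').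
Proof. by move=> /asboolP h; apply/asboolP; rewrite -opprD; apply: PN. Qed.
Lemma qrelZ a x x' : qrel x x' -> qrel (a *: x) (a *: x').
Proof. by move=> /asboolP h; apply/asboolP; rewrite -scalerBr; apply: PZ. Qed.

Definition qadd (p q : quot) := qpi (sval p + sval q).
Definition qopp (p : quot) := qpi (- sval p).
Definition qzero := qpi 0.
Definition qscale (a : A) (p : quot) := qpi (a *: sval p).

Lemma qpiD x y : qpi (x + y) = qadd (qpi x) (qpi y).
Proof. by apply/qpi_eq; apply: qrelD; apply: canon_rel. Qed.
Lemma qpiN x : qpi (- x) = qopp (qpi x).
Proof. by apply/qpi_eq; apply: qrelN; apply: canon_rel. Qed.
Lemma qpiZ a x : qpi (a *: x) = qscale a (qpi x).
Proof. by apply/qpi_eq; apply: qrelZ; apply: canon_rel. Qed.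

Lemma qpi_surj (q : quot) : exists x, q = qpi x.
Proof. by exists (sval q); rewrite qpi_val. Qed.

Lemma qaddA : associative qadd.
Proof.
move=> p q r; have [x ->] := qpi_surj p; have [y ->] := qpi_surj q; have [z ->] := qpi_surj r.
by rewrite -!qpiD addrA.
Qed.
Lemma qaddC : commutative qadd.
Proof.
move=> p q; have [x ->] := qpi_surj p; have [y ->] := qpi_surj q.
by rewrite -!qpiD addrC.
Qed.
Lemma qadd0 : left_id qzero qadd.
Proof. by move=> p; case: (qpi_surj p) => [x ->]; rewrite -qpiD add0r. Qed.
Lemma qaddN : left_inverse qzero qopp qadd.
Proof. by move=> p; case: (qpi_surj p) => [x ->]; rewrite -qpiN -qpiD addNr. Qed.

HB.instance Definition _ := GRing.isZmodule.Build quot qaddA qaddC qadd0 qaddN.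

Lemma qscaleA a b p : qscale a (qscale b p) = qscale (a * b) p.
Proof. by case: (qpi_surj p) => [x ->]; rewrite -!qpiZ scalerA. Qed.
Lemma qscale1 : left_id 1 qscale.
Proof. by move=> p; case: (qpi_surj p) => [x ->]; rewrite -!qpiZ scale1r. Qed.
Lemma qscaleDr : right_distributive qscale (@GRing.add quot).
Proof.
move=> a p q; have [x ->] := qpi_surj p; have [y ->] := qpi_surj q.
by rewrite -[qpi x + _]/(qadd _ _) -qpiD -!qpiZ -[qpi _ + qpi _]/(qadd _ _) -qpiD scalerDr.
Qed.
Lemma qscaleDl v : {morph qscale^~ v : a b / a + b}.
Proof.
move=> a b; case: (qpi_surj v) => [x ->].
by rewrite -!qpiZ -[qpi _ + qpi _]/(qadd _ _) -qpiD scalerDl.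
Qed.

HB.instance Definition _ := GRing.Zmodule_isLmodule.Build A quot qscaleA qscale1 qscaleDr qscaleDl.

Lemma qpi_lin a x y : qpi (a *: x + y) = a *: qpi x + qpi y.
Proof. by rewrite qpiD qpiZ. Qed.

Lemma qpi0 x : qpi x = 0 <-> P x.
Proof.
have ->: (0 : quot) = qpi 0 by [].
rewrite qpi_eq; split => [/asboolP|h]; first by rewrite subr0.
by apply/asboolP; rewrite subr0.
Qed.

Lemma canon_qrel x : qrel (sval (qpi x)) x.
Proof. exact: qsym (canon_rel x). Qed.

End Quot.

Section Main.
Variable A : pzRingType.
Local Notation mod := (lmodType A).

Definition Z0 : mod := 'rV[A]_0.
Lemma Z0_zero : is_zero Z0.
Proof. by move=> x; rewrite thinmx0. Qed.

Section Lin.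
Variables (M N : mod) (f : M -> N) (hf : is_lin f).
Lemma lin0 : f 0 = 0.
Proof.
have := hf 1 0 0; rewrite !scale1r addr0 => e.
by apply/(addrI (f 0)); rewrite addr0 -e.
Qed.
Lemma linD x y : f (x + y) = f x + f y.
Proof. by have := hf 1 x y; rewrite !scale1r. Qed.
Lemma linZ a x : f (a *: x) = a *: f x.
Proof. by have := hf a x 0; rewrite !addr0 lin0 addr0. Qed.
Lemma linN x : f (- x) = - f x.
Proof. by rewrite -scaleN1r linZ scaleN1r. Qed.
Lemma linB x y : f (x - y) = f x - f y.
Proof. by rewrite linD linN. Qed.
End Lin.

Lemma lin_comp (M N K : mod) (f : M -> N) (g : N -> K) :
  is_lin f -> is_lin g -> is_lin (g \o f).
Proof. by move=> hf hg a x y /=; rewrite hf hg. Qed.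

Lemma lin_id (M : mod) : is_lin (@id M).
Proof. by []. Qed.

Lemma iso_refl (M : mod) : iso M M.
Proof. by exists id; split => //; exists id. Qed.

Lemma iso_sym (M N : mod) : iso M N -> iso N M.
Proof.
case=> f [hf [g fg gf]]; exists g; split; last by exists f.
by move=> a x y; apply: (can_inj fg); rewrite gf hf !gf.
Qed.

Lemma iso_trans (M N K : mod) : iso M N -> iso N K -> iso M K.
Proof.
case=> f [hf bf] [g [hg bg]]; exists (g \o f); split.
  exact: lin_comp.
exact: bij_comp.
Qed.

Lemma iso_zero (M N : mod) : is_zero M -> is_zero N -> iso M N.
Proof.
move=> hM hN; exists (fun _ => 0); split.
  by move=> a x y; rewrite scaler0 addr0.
by exists (fun _ => 0) => x; apply/esym; [apply: hM|apply: hN].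
Qed.

Lemma iso_prod (Y Y' Z Z' : mod) : iso Y Y' -> iso Z Z' -> iso (Y * Z)%type (Y' * Z')%type.
Proof.
case=> f1 [h1 [g1 c1 d1]] [f2 [h2 [g2 c2 d2]]].
exists (fun p => (f1 p.1, f2 p.2)); split.
  by move=> a [y z] [y' z'] /=; rewrite h1 h2.
by exists (fun p => (g1 p.1, g2 p.2)) => -[y z] /=; rewrite ?c1 ?c2 ?d1 ?d2.
Qed.

Lemma iso_swap (Y Z : mod) : iso (Y * Z)%type (Z * Y)%type.
Proof.
exists (fun p => (p.2, p.1)); split => //.
by exists (fun p => (p.2, p.1)) => -[].
Qed.

Lemma iso_assoc (X Y Z : mod) : iso ((X * Y) * Z)%type (X * (Y * Z))%type.
Proof.
exists (fun p => (p.1.1, (p.1.2, p.2))); split => //.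
by exists (fun p => ((p.1, p.2.1), p.2.2)) => [[[]]|[?[]]].
Qed.

Lemma iso_prod0 (Y Z : mod) : is_zero Z -> iso (Y * Z)%type Y.
Proof.
move=> hZ; exists fst; split => //.
by exists (fun y => (y, 0)) => [[y z]|y] //=; rewrite [in RHS](hZ z).
Qed.

Lemma is_zero_iso (M N : mod) : is_zero M -> iso M N -> is_zero N.
Proof.
move=> hM [f [hf [g c1 c2]]] x; rewrite -(c2 x) (hM (g x)); exact: lin0.
Qed.

Lemma addc_iso S (X Y : mod) : addc S Y -> iso Y X -> addc S X.
Proof.
move=> h i; apply: (@addc_sum _ _ X Y Z0 h (addc_zero _ Z0_zero)).
exact: iso_trans (iso_prod0 _ Z0_zero) i.
Qed.

Lemma addc_mono (S S' : mod -> Prop) : (forall X, S X -> S' X) -> forall X, addc S X -> addc S' X.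
Proof.
move=> h X; elim => {X}.
- by move=> X hX; apply: addc_zero.
- by move=> X Y hY i; apply: addc_in (h _ hY) i.
- by move=> X Y Z _ hY _ hZ i; apply: addc_sum hY hZ i.
- by move=> X Y Z _ hY i; apply: addc_summand hY i.
Qed.

Lemma addc_idem (S : mod -> Prop) X : addc (addc S) X -> addc S X.
Proof.
elim => {X}.
- by move=> X hX; apply: addc_zero.
- by move=> X Y hY i; apply: addc_iso hY i.
- by move=> X Y Z _ hY _ hZ i; apply: addc_sum hY hZ i.
- by move=> X Y Z _ hY i; apply: addc_summand hY i.
Qed.

Lemma addc_self (S : mod -> Prop) X : S X -> addc S X.
Proof. by move=> h; apply: addc_in h (iso_refl X). Qed.

Definition closed (S : mod -> Prop) := forall X, addc S X -> S X.

Lemma closed_zero S X : closed S -> is_zero X -> S X.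
Proof. by move=> hS hX; apply/hS/addc_zero. Qed.
Lemma closed_iso S X Y : closed S -> S Y -> iso Y X -> S X.
Proof. by move=> hS hY i; apply/hS; apply: addc_in hY i. Qed.
Lemma closed_prod S Y Z : closed S -> S Y -> S Z -> S (Y * Z)%type.
Proof.
move=> hS hY hZ; apply/hS; apply: addc_sum (addc_self hY) (addc_self hZ) (iso_refl _).
Qed.
Lemma closed_addc S : closed (addc S).
Proof. move=> X; exact: addc_idem. Qed.

Definition ext (S1 S2 : mod -> Prop) : mod -> Prop :=
  fun X => exists (Y1 Y2 : mod) (f : Y1 -> X) (g : X -> Y2),
           S1 Y1 /\ S2 Y2 /\ short_exact f g.

Lemma bulletE S1 S2 : bullet S1 S2 = addc (ext S1 S2).
Proof. by []. Qed.

Lemma bullet_mono (S1 S2 S1' S2' : mod -> Prop) :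
  (forall X, S1 X -> S1' X) -> (forall X, S2 X -> S2' X) ->
  forall X, bullet S1 S2 X -> bullet S1' S2' X.
Proof.
move=> h1 h2; apply: addc_mono => X [Y1 [Y2 [f [g [hY1 [hY2 hs]]]]]].
by exists Y1, Y2, f, g; split; [apply: h1|split; [apply: h2|]].
Qed.


Lemma se_zero_left (Z X : mod) : is_zero Z -> short_exact (fun _ : Z => (0 : X)) (@id X).
Proof.
move=> hZ; split; first by move=> a x y; rewrite scaler0 addr0.
split; first by [].
split; first by move=> x y _; rewrite (hZ x) (hZ y).
split; first by move=> z; exists z.
by move=> x; split => [->|[t <-]]; [exists 0|].
Qed.

Lemma se_zero_right (X Z : mod) : is_zero Z -> short_exact (@id X) (fun _ : X => (0 : Z)).
Proof.
move=> hZ; split; first by [].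
split; first by move=> a x y; rewrite scaler0 addr0.
split; first by move=> x y.
split; first by move=> z; exists 0; rewrite (hZ z).
by move=> x; split => // _; exists x.
Qed.

Lemma se_isoL (M' M X N : mod) (f : M -> X) (g : X -> N) :
  iso M' M -> short_exact f g -> exists f' : M' -> X, short_exact f' g.
Proof.
move=> [phi [hphi bphi]] [hf [hg [fi [sg ex]]]]; exists (f \o phi).
split; first exact: lin_comp.
split=> //; split; first exact: inj_comp fi (bij_inj bphi).
split=> // x; rewrite ex; split=> [[t <-]|[t <-]]; last by exists (phi t).
by case: bphi => psi c1 c2; exists (psi t) => /=; rewrite c2.
Qed.

Lemma se_isoR (M X N N' : mod) (f : M -> X) (g : X -> N) :
  iso N N' -> short_exact f g -> exists g' : X -> N', short_exact f g'.
Proof.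
move=> [phi [hphi bphi]] [hf [hg [fi [sg ex]]]]; exists (phi \o g).
split=> //; split; first exact: lin_comp.
split=> //; split.
  case: bphi => psi c1 c2 z; have [x hx] := sg (psi z); exists x => /=; by rewrite hx c2.
move=> x; rewrite -ex /=; split; last by move=> ->; apply: lin0.
by move=> h; apply: (bij_inj bphi); rewrite h lin0.
Qed.

Lemma se_sum (X1 W1 Y1 X2 W2 Y2 : mod) (f1 : X1 -> W1) (g1 : W1 -> Y1)
  (f2 : X2 -> W2) (g2 : W2 -> Y2) :
  short_exact f1 g1 -> short_exact f2 g2 ->
  short_exact (fun p : (X1 * X2)%type => (f1 p.1, f2 p.2) : (W1 * W2)%type)
              (fun p : (W1 * W2)%type => (g1 p.1, g2 p.2) : (Y1 * Y2)%type).
Proof.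
move=> [hf1 [hg1 [i1 [s1 e1]]]] [hf2 [hg2 [i2 [s2 e2]]]].
split; first by move=> a [x1 x2] [y1 y2] /=; rewrite hf1 hf2.
split; first by move=> a [x1 x2] [y1 y2] /=; rewrite hg1 hg2.
split; first by move=> [x1 x2] [y1 y2] /= [/i1 -> /i2 ->].
split; first by move=> [z1 z2]; have [x1 h1] := s1 z1; have [x2 h2] := s2 z2;
  exists (x1, x2); rewrite /= h1 h2.
move=> [w1 w2] /=; split.
  move=> h; have h1 : g1 w1 = 0 := congr1 fst h; have h2 : g2 w2 = 0 := congr1 snd h.
  have [t1 <-] := (e1 w1).1 h1; have [t2 <-] := (e2 w2).1 h2.
  by exists (t1, t2).
move=> [[t1 t2] /= [<- <-]].
have -> : g1 (f1 t1) = 0 by apply/(e1 _).2; exists t1.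
have -> : g2 (f2 t2) = 0 by apply/(e2 _).2; exists t2.
by [].
Qed.

Lemma ext_sum X Y W1 W2 : closed X -> closed Y -> ext X Y W1 -> ext X Y W2 ->
  ext X Y (W1 * W2)%type.
Proof.
move=> hX hY [U1 [V1 [f1 [g1 [hU1 [hV1 s1]]]]]] [U2 [V2 [f2 [g2 [hU2 [hV2 s2]]]]]].
exists (U1 * U2)%type, (V1 * V2)%type, (fun p : (U1 * U2)%type => (f1 p.1, f2 p.2) : (W1 * W2)%type), (fun p : (W1 * W2)%type => (g1 p.1, g2 p.2) : (V1 * V2)%type); split; first exact: closed_prod.
split; first exact: closed_prod.
exact: se_sum s1 s2.
Qed.

Lemma iso_mid (a b c d : mod) : iso ((a * b) * (c * d))%type ((a * c) * (b * d))%type.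
Proof.
exists (fun p => ((p.1.1, p.2.1), (p.1.2, p.2.2))); split => //.
by exists (fun p => ((p.1.1, p.2.1), (p.1.2, p.2.2))) => -[[? ?] [? ?]].
Qed.

Lemma decomp X Y M : closed X -> closed Y -> addc (ext X Y) M ->
  exists (M' W : mod), ext X Y W /\ iso (M * M')%type W.
Proof.
move=> hX hY; elim => {M}.
- move=> M hM; exists Z0, M; split; last exact: iso_prod0 Z0_zero.
  exists M, Z0, id, (fun _ => 0); split; first exact: closed_zero hM.
  split; first exact: closed_zero Z0_zero.
  exact: se_zero_right Z0_zero.
- move=> M M'' hM'' i; exists Z0, M''; split => //.
  exact: iso_trans (iso_prod0 _ Z0_zero) (iso_sym i).
- move=> M Y1 Y2 _ [Y1' [W1 [e1 i1]]] _ [Y2' [W2 [e2 i2]]] i.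
  exists (Y1' * Y2')%type, (W1 * W2)%type; split; first exact: ext_sum.
  apply: iso_trans (iso_prod (iso_sym i) (iso_refl _)) _.
  exact: iso_trans (iso_mid _ _ _ _) (iso_prod i1 i2).
- move=> M Y0 Z _ [Y' [W [e i1]]] i.
  exists (Z * Y')%type, W; split => //.
  apply: iso_trans (iso_sym (iso_assoc _ _ _)) _.
  exact: iso_trans (iso_prod i (iso_refl _)) i1.
Qed.


Lemma quot_core (U W V F N : mod) (f1 : U -> W) (g1 : W -> V) (f2 : W -> F) (g2 : F -> N) :
  short_exact f1 g1 -> short_exact f2 g2 ->
  exists (Q : mod) (h : F -> Q) (k : V -> Q) (l : Q -> N),
    short_exact (f2 \o f1) h /\ short_exact k l.
Proof.
move=> [hf1 [hg1 [i1 [s1 e1]]]] [hf2 [hg2 [i2 [s2 e2]]]].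
pose P := fun x : F => exists u, f2 (f1 u) = x.
have hP : is_sub P.
  split; first by exists 0; rewrite !lin0.
  by move=> a x y [u <-] [v <-]; exists (a *: u + v); rewrite hf1 hf2.
pose pick v := proj1_sig (cid (s1 v)).
have pickP v : g1 (pick v) = v := proj2_sig (cid (s1 v)).
have kwell w w' : g1 w = g1 w' -> qpi hP (f2 w) = qpi hP (f2 w').
  move=> e; apply/qpi_eq; apply/asboolP.
  have [t ht] : exists t, f1 t = w - w'.
    by apply/(e1 _).1; rewrite linB // e subrr.
  by exists t; rewrite ht linB.
have g2P x : P x -> g2 x = 0.
  by move=> [u <-]; apply/(e2 _).2; exists (f1 u).
have g2rel x y : qrel P x y -> g2 x = g2 y.
  by move=> /asboolP /g2P; rewrite linB //; apply: subr0_eq.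
have lq x : g2 (sval (qpi hP x)) = g2 x.
  exact/g2rel/canon_qrel.
exists (quot hP), (qpi hP), (fun v => qpi hP (f2 (pick v))), (fun q => g2 (sval q)).
split.
  split; first exact: lin_comp.
  split; first by move=> a x y; apply: qpi_lin.
  split; first exact: inj_comp.
  split; first by move=> q; exists (sval q); rewrite qpi_val.
  by move=> x; rewrite qpi0.
split.
  move=> a v v'; rewrite -qpi_lin -hf2; apply: kwell.
  by rewrite hg1 !pickP.
split.
  move=> a q q'; have [x ->] := qpi_surj q; have [y ->] := qpi_surj q'.
  by rewrite -qpi_lin !lq hg2.
split.
  move=> v v' /qpi_eq /asboolP [u hu].
  have : f1 u = pick v - pick v' by apply: i2; rewrite hu linB.
  move/(congr1 g1); rewrite linB // !pickP.
  have -> : g1 (f1 u) = 0 by apply/(e1 _).2; exists u.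
  by move/esym/subr0_eq.
split.
  by move=> n; have [x hx] := s2 n; exists (qpi hP x); rewrite lq.
move=> q; have [x ->] := qpi_surj q; rewrite lq; split.
  move=> /(e2 _).1 [w hw]; exists (g1 w).
  by rewrite (kwell _ w) ?pickP // hw.
by move=> [v hv]; rewrite -lq -hv lq; apply/(e2 _).2; exists (pick v).
Qed.

Lemma bullet_assoc X Y Z : closed X -> closed Y ->
  forall E, bullet (bullet X Y) Z E -> bullet X (bullet Y Z) E.
Proof.
move=> hX hY E h; apply: addc_idem; move: E h; apply: addc_mono.
move=> E [M [N [f [g [hM [hN hs]]]]]].
have [M' [W [[U [V [f1 [g1 [hU [hV hs1]]]]]] i]]] := decomp hX hY hM.
have hs0 := se_sum hs (se_zero_right M' Z0_zero).
have [f2 hs2] := se_isoL (iso_sym i) hs0.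
have [g2 hs3] := se_isoR (iso_prod0 N Z0_zero) hs2.
have [Q [h [k [l [hsa hsb]]]]] := quot_core hs1 hs3.
have hE' : bullet X (bullet Y Z) (E * M')%type.
  apply: addc_self; exists U, Q, (f2 \o f1), h; split => //; split => //.
  by apply: addc_self; exists V, N, k, l.
exact: addc_summand hE' (iso_refl _).
Qed.


Lemma layer_closed (T : mod) n : closed (layer T n.+1).
Proof. by case: n => [|n] X; apply: addc_idem. Qed.

Lemma layer_sub (T T' : mod) : addc (fun X => X = T') T -> forall n X, layer T n X -> layer T' n X.
Proof.
move=> hT.
have hA : forall X, addc (fun X => X = T) X -> addc (fun X => X = T') X.
  move=> X hX; apply: addc_idem; move: X hX; apply: addc_mono => Y ->; exact: hT.
elim=> [|[|n] IH] X //.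
- exact: hA.
- by apply: bullet_mono.
Qed.

Lemma layer_add (T : mod) a b X : bullet (layer T a.+1) (layer T b.+1) X -> layer T (a + b).+2 X.
Proof.
elim: a X => [|a IH] X h; first by rewrite add0n.
rewrite addSn.
change (bullet (bullet (addc (fun Y => Y = T)) (layer T a.+1)) (layer T b.+1) X) in h.
have h' := bullet_assoc (@closed_addc _) (layer_closed (T:=T) (n:=a)) h.
change (bullet (addc (fun Y => Y = T)) (layer T (a+b).+2) X).
by apply: bullet_mono h' => // Y; apply: IH.
Qed.

Lemma sum_cat (M : mod) (s t : seq M) (c : nat -> A) :
  \sum_(i < size (s ++ t)) c i *: (s ++ t)`_i =
  \sum_(i < size s) c i *: s`_i + \sum_(i < size t) c (size s + i)%N *: t`_i.
Proof.
rewrite size_cat big_split_ord /=; congr (_ + _); apply: eq_bigr => i _ /=.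
  by rewrite nth_cat ltn_ord.
by rewrite nth_cat ltnNge leq_addr /= addKn.
Qed.

Lemma sum_pair (M N : mod) (I : Type) (r : seq I) (F : I -> M) (G : I -> N) :
  \sum_(i <- r) ((F i, G i) : (M * N)%type) = (\sum_(i <- r) F i, \sum_(i <- r) G i).
Proof.
elim: r => [|x r IH]; first by rewrite !big_nil.
by rewrite !big_cons IH.
Qed.

Lemma fg_prod (T1 T2 : mod) : fg T1 -> fg T2 -> fg (T1 * T2)%type.
Proof.
move=> [s1 h1] [s2 h2].
exists ([seq ((x, 0) : (T1 * T2)%type) | x <- s1] ++ [seq ((0, y) : (T1 * T2)%type) | y <- s2]).
move=> [m1 m2].
have [c1 e1] := h1 m1; have [c2 e2] := h2 m2.
pose c n := if (n < size s1)%N then nth 0 (mktuple c1) n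
            else nth 0 (mktuple c2) (n - size s1).
exists (fun i => c i).
rewrite sum_cat !size_map.
rewrite (eq_bigr (fun i : 'I_(size s1) => ((c1 i *: s1`_i, c1 i *: 0) : (T1 * T2)%type))); last first.
  by move=> i _; rewrite /c ltn_ord nth_mktuple (nth_map 0).
rewrite (eq_bigr (fun i : 'I_(size s2) => ((c2 i *: 0, c2 i *: s2`_i) : (T1 * T2)%type))); last first.
  by move=> i _; rewrite /c ltnNge leq_addr /= addKn nth_mktuple (nth_map 0).
have z k (d : 'I_k -> A) (M : mod) : \sum_(i < k) d i *: (0 : M) = 0.
  by rewrite big1 // => i _; rewrite scaler0.
rewrite !sum_pair -e1 -e2 !z.
by change ((m1, m2) = (m1 + 0, 0 + m2)); rewrite addr0 add0r.
Qed.

Lemma ed_someP (C : mod -> Prop) k : ed C = Some k -> ed_le C k /\ forall n, ed_le C n -> (k <= n)%N.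
Proof.
rewrite /ed; case: pselect => // h [<-].
case: ex_minnP => m /asboolP hm hmin; split => // n hn; apply: hmin; exact/asboolP.
Qed.

Lemma ed_le_some (C : mod -> Prop) n : ed_le C n -> exists k, ed C = Some k /\ (k <= n)%N.
Proof.
move=> hn; rewrite /ed; case: pselect => [h|h]; last by exfalso; apply: h; exists n.
eexists; split; first reflexivity.
case: ex_minnP => m _ hmin; apply: hmin; exact/asboolP.
Qed.

Lemma ed_mono (C C' : mod -> Prop) : (forall X, C X -> C' X) -> ole (ed C) (ed C').
Proof.
move=> h; case e': (ed C') => [k|] //=; last by case: (ed C).
have [hk _] := ed_someP e'.
have hC : ed_le C k by case: hk => T [hT hX]; exists T; split => // X /h; exact: hX.
by have [j [-> hj]] := ed_le_some hC.
Qed.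

End Main.

Theorem proposition2p8 (A : pzRingType) (C D : lmodType A -> Prop) :
  artin_algebra A -> subcat C -> subcat D ->
  ole (omax (ed C) (ed D)) (ed (bullet C D)) /\
  ole (ed (bullet C D)) (oadd (oadd (ed C) (ed D)) (Some 1%N)).
Proof.
move=> _ [fgC clC] [fgD clD].
have CD : forall X, C X -> bullet C D X.
  move=> X hX; apply: addc_self; exists X, (Z0 A), id, (fun _ => 0); split => //; split.
    exact: clD (addc_zero _ (@Z0_zero A)).
  exact: se_zero_right (@Z0_zero A).
have DC : forall X, D X -> bullet C D X.
  move=> X hX; apply: addc_self; exists (Z0 A), X, (fun _ => 0), id; split.
    exact: clC (addc_zero _ (@Z0_zero A)).
  split => //; exact: se_zero_left (@Z0_zero A).
split.
  move: (ed_mono CD) (ed_mono DC).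
  case: (ed (bullet C D)) => [k|]; case: (ed C) => [a|]; case: (ed D) => [b|] //= ha hb.
  by rewrite geq_max ha hb.
case eC: (ed C) => [m|]; last by case: (ed (bullet C D)).
case eD: (ed D) => [n|]; last by case: (ed (bullet C D)).
have [[T1 [fT1 h1]] _] := ed_someP eC; have [[T2 [fT2 h2]] _] := ed_someP eD.
have hT : addc (fun X => X = (T1 * T2)%type) (T1 * T2)%type.
  by apply: addc_self.
have hB : ed_le (bullet C D) (m + n + 1).
  exists (T1 * T2)%type; split; first exact: fg_prod.
  move=> X hX; rewrite addn1; apply: layer_add.
  apply: bullet_mono hX => Y hY.
    apply: layer_sub (h1 _ hY).
    exact: addc_summand hT (iso_refl _).
  apply: layer_sub (h2 _ hY).
  exact: addc_summand hT (iso_swap _ _).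
by have [j [-> hj]] := ed_le_some hB.
Qed.
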